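(* Let $A$ be an independent set in $G(n,4,1)$, and let $A_0$, $k$, $A_2$ be as in the context. Then $|A_2|\le 2k^2+o(n^2)$, where the $o(n^2)$ term (as $n\to\infty$) does not depend on $A$ or on the choice of $A_0$.
   Context: $G(n,4,1)$ is the graph on the $4$-element subsets of $[n]$ in which two are adjacent iff they intersect in exactly one element. Let $A_0=\{v_1,\dots,v_k\}\subset A$ be a subfamily of pairwise disjoint sets of maximum possible cardinality, and let $A_2$ be the set of $v\in A\setminus A_0$ that intersect exactly two of the sets $v_1,\dots,v_k$. *)

(* Defs.v *)
From mathcomp Require Import all_boot all_order all_algebra.
Set Implicit Arguments. Unset Strict Implicit. Unset Printing Implicit Defensive.

(* Vertices of G(n,4,1): 4-element subsets of [n] = 'I_n.
   Adjacency: intersect in exactly one element. *)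
Definition G41_adj (n : nat) (u v : {set 'I_n}) : bool := #|u :&: v| == 1.

Definition G41_indep (n : nat) (A : {set {set 'I_n}}) : Prop :=
  (forall v, v \in A -> #|v| = 4) /\
  (forall u v, u \in A -> v \in A -> ~~ G41_adj u v).

Definition disj_subfam (n : nat) (A B : {set {set 'I_n}}) : Prop :=
  B \subset A /\
  (forall u v, u \in B -> v \in B -> u != v -> [disjoint u & v]).

Definition max_disj_subfam (n : nat) (A A0 : {set {set 'I_n}}) : Prop :=
  disj_subfam A A0 /\ (forall B, disj_subfam A B -> #|B| <= #|A0|).

Definition A2_of (n : nat) (A A0 : {set {set 'I_n}}) : {set {set 'I_n}} :=
  [set v in A :\: A0 | #|[set w in A0 | ~~ [disjoint v & w]]| == 2].

(* Main.v *)
Require Import Defs.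
From mathcomp Require Import all_boot all_order all_algebra.
Import Order.TTheory GRing.Theory Num.Theory.
From mathcomp Require Import zify.
Set Implicit Arguments. Unset Strict Implicit. Unset Printing Implicit Defensive.

Lemma card_bigcup_le (T I : finType) (P : pred I) (F : I -> {set T}) :
  #|\bigcup_(i | P i) F i| <= \sum_(i | P i) #|F i|.
Proof.
apply: (big_rec2 (fun (X : {set T}) (s : nat) => #|X| <= s)); first by rewrite cards0.
move=> i X s _ IH; apply: leq_trans (leq_add (leqnn _) IH).
by rewrite cardsU leq_subr.
Qed.

Lemma eq2 (T : finType) (a b : {set T}) :
  #|a| = 2 -> #|b| = 2 -> #|a :&: b| = 2 -> a = b.
Proof.
move=> ha hb hab.
have e1 : a :&: b = a by apply/eqP; rewrite eqEcard subsetIl ha hab.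
have e2 : a :&: b = b by apply/eqP; rewrite eqEcard subsetIr hb hab.
by rewrite -e1 {2}(esym e2).
Qed.

Lemma small_int (T : finType) (a b : {set T}) :
  #|a| = 2 -> #|b| = 2 -> #|a :&: b| != 1 -> a != b -> #|a :&: b| = 0.
Proof.
move=> ha hb h1 hne.
have : #|a :&: b| <= 2 by rewrite -ha subset_leq_card // subsetIl.
have h2 : #|a :&: b| != 2 by apply: contra hne => /eqP h; rewrite (eq2 ha hb h).
move: h1 h2; case: #|_| => [|[|[|m]]] //.
Qed.

Lemma tri (T : finType) (w a b c : {set T}) : #|w| = 4 ->
  a \subset w -> b \subset w -> c \subset w -> #|a| = 2 -> #|b| = 2 -> #|c| = 2 ->
  #|a :&: b| = 1 -> #|a :&: c| != 1 -> #|b :&: c| != 1 -> False.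
Proof.
move=> hw aw bw cw ha hb hc hab hac hbc.
have ac : a != c by apply/eqP=> e; move: hbc; rewrite -e setIC hab.
have bc : b != c by apply/eqP=> e; move: hac; rewrite -e hab.
have /eqP ac0 := small_int ha hc hac ac.
have /eqP bc0 := small_int hb hc hbc bc.
rewrite cards_eq0 in ac0; rewrite cards_eq0 in bc0.
have hu : #|a :|: b| = 3 by rewrite cardsU ha hb hab.
have hu2 : #|c :|: (a :|: b)| = 5.
  by rewrite cardsU hc hu setIUr setIC (eqP ac0) setIC (eqP bc0) setU0 cards0.
have : #|c :|: (a :|: b)| <= #|w|.
  by apply: subset_leq_card; rewrite !subUset cw aw bw.
by rewrite hu2 hw.
Qed.
Section Main.
Variables (n : nat) (A A0 : {set {set 'I_n}}).
Hypotheses (HA : G41_indep A) (HA0 : max_disj_subfam A A0).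

Definition S (v : {set 'I_n}) := [set w in A0 | ~~ [disjoint v & w]].
Definition A2 := A2_of A A0.

Lemma sz4 v : v \in A -> #|v| = 4.
Proof. by case: HA => h _; apply: h. Qed.

Lemma A0A w : w \in A0 -> w \in A.
Proof. by case: HA0 => [[/subsetP h _] _]; apply: h. Qed.

Lemma dis0 u w : u \in A0 -> w \in A0 -> u != w -> u :&: w = set0.
Proof. by case: HA0 => [[_ h] _] hu hw hne; apply: disjoint_setI0; apply: h. Qed.

Lemma nadj u v : u \in A -> v \in A -> #|u :&: v| != 1.
Proof. by case: HA => _ h hu hv; have := h _ _ hu hv. Qed.

Lemma A2P v : v \in A2 -> v \in A /\ #|S v| = 2.
Proof. by rewrite /A2 /A2_of inE => /andP[]; rewrite inE => /andP[_ ->] /eqP. Qed.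

Lemma Sv_A0 v w : w \in S v -> w \in A0.
Proof. by rewrite inE => /andP[]. Qed.

Lemma meet_ge2 v w : v \in A -> w \in S v -> 2 <= #|v :&: w|.
Proof.
move=> vA; rewrite inE => /andP[wA0 nd].
have h1 := nadj vA (A0A wA0).
have h0 : #|v :&: w| != 0 by rewrite cards_eq0 setI_eq0.
by move: h0 h1; case: #|_| => [|[|m]].
Qed.

Lemma key v w1 w2 : v \in A2 -> S v = [set w1; w2] -> w1 != w2 ->
  [/\ #|v :&: w1| = 2, #|v :&: w2| = 2 & v \subset w1 :|: w2].
Proof.
move=> /A2P[vA _] hS hne.
have i1 : w1 \in S v by rewrite hS !inE eqxx.
have i2 : w2 \in S v by rewrite hS !inE eqxx orbT.
have g1 := meet_ge2 vA i1; have g2 := meet_ge2 vA i2.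
have d : w1 :&: w2 = set0 := dis0 (Sv_A0 i1) (Sv_A0 i2) hne.
have hU : #|v :&: (w1 :|: w2)| = #|v :&: w1| + #|v :&: w2|.
  rewrite setIUr cardsU.
  have -> : v :&: w1 :&: (v :&: w2) = set0.
    by rewrite setIACA d setI0.
  by rewrite cards0 subn0.
have le4 : #|v :&: (w1 :|: w2)| <= 4 by rewrite -(sz4 vA) subset_leq_card // subsetIl.
have e1 : #|v :&: w1| = 2 by move: g1 g2 hU le4; clear; lia.
have e2 : #|v :&: w2| = 2 by move: g1 g2 hU le4; clear; lia.
split=> //.
have : v :&: (w1 :|: w2) == v by rewrite eqEcard subsetIl hU e1 e2 (sz4 vA).
by move/eqP/setIidPl.
Qed.

Definition pe (w v u : {set 'I_n}) : bool :=
  [&& v \in A2, S v == [set w; u] & u != w].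

Lemma partner v w : v \in A2 -> w \in S v -> exists u, pe w v u.
Proof.
move=> vA2 wS; have [_ /eqP /cards2P [x [y [hxy hS]]]] := A2P vA2.
move: (wS); rewrite hS !inE => /orP[] /eqP ->.
  by exists y; rewrite /pe vA2 hS eqxx eq_sym.
by exists x; rewrite /pe vA2 hS setUC eqxx.
Qed.

Lemma pe_facts w v u : pe w v u ->
  [/\ w \in A0, u \in A0, #|v :&: w| = 2, v \subset w :|: u & v \in A].
Proof.
case/and3P=> vA2 /eqP hS hne.
have i1 : w \in S v by rewrite hS !inE eqxx.
have i2 : u \in S v by rewrite hS !inE eqxx orbT.
have hne' : w != u by rewrite eq_sym.
have [e1 _ sub] := key vA2 hS hne'.
by split=> //; [exact: Sv_A0 i1 | exact: Sv_A0 i2 | case: (A2P vA2)].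
Qed.

Lemma pair_comp w v v' u u' : pe w v u -> pe w v' u' -> u != u' ->
  #|(v :&: w) :&: (v' :&: w)| != 1.
Proof.
move=> /pe_facts [wA uA _ sv vA] /pe_facts [_ uA' _ sv' vA'] hne.
have d := dis0 uA uA' hne.
have sub : v :&: v' \subset w.
  apply/subsetP=> x; rewrite inE => /andP[xv xv'].
  move: (subsetP sv x xv) (subsetP sv' x xv'); rewrite !inE.
  case: (x \in w) => //= xu xu'.
  have : x \in u :&: u' by rewrite inE xu xu'.
  by rewrite d inE.
rewrite setIACA setIid (setIidPl sub).
exact: nadj vA vA'.
Qed.

Definition multi w := [exists v, exists v', exists u, exists u',
  [&& pe w v u, pe w v' u' & u != u']].

Definition R w := [set v in A2 | w \in S v].
Definition M w := [set v :&: w | v in R w].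

Lemma M_facts w e : e \in M w -> exists v u, [/\ pe w v u, e = v :&: w, e \subset w & #|e| = 2].
Proof.
case/imsetP=> v; rewrite inE => /andP[vA2 wS] ->.
have [u hu] := partner vA2 wS.
have [_ _ c _ _] := pe_facts hu.
by exists v, u; split=> //; rewrite subsetIr.
Qed.

Lemma Mw_ok w e e' : multi w -> e \in M w -> e' \in M w -> #|e :&: e'| != 1.
Proof.
move=> hm /M_facts [v [u [pu -> s1 c1]]] /M_facts [v' [u' [pu' -> s2 c2]]].
case: (eqVneq u u') => [eu|hne]; last exact: pair_comp pu pu' hne.
subst u'.
apply/negP=> /eqP h1.
case/existsP: hm => p /existsP [p' /existsP [a /existsP [a' /and3P [pa pa' haa]]]].
have [b [q [pb hbu]]] : exists b q, pe w q b /\ b != u.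
  case: (eqVneq a u) => [eau|hau]; last by exists a, p.
  by exists a', p'; split=> //; rewrite -eau eq_sym.
have [_ _ cb _ _] := pe_facts pb.
have hw : #|w| = 4 by have [wA _ _ _ _] := pe_facts pu; exact: sz4 (A0A wA).
apply: (tri hw s1 s2 (subsetIr q w) c1 c2 cb h1).
  by rewrite setIC; apply: pair_comp pb pu hbu.
by rewrite setIC; apply: pair_comp pb pu' hbu.
Qed.

Lemma M_card w : w \in A0 -> multi w -> #|M w| <= 2.
Proof.
move=> wA hm.
have tI : trivIset (M w).
  apply/trivIsetP=> e e' he he' hne.
  have [v [u [_ _ _ c]]] := M_facts he.
  have [v' [u' [_ _ _ c']]] := M_facts he'.
  rewrite -setI_eq0 -cards_eq0.
  by rewrite (small_int c c' (Mw_ok hm he he') hne).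
have hs : \sum_(e in M w) #|e| = #|M w| * 2.
  rewrite -sum_nat_const; apply: eq_bigr => e he.
  by have [v [u [_ _ _ c]]] := M_facts he.
have hc : #|cover (M w)| <= 4.
  rewrite -(sz4 (A0A wA)); apply: subset_leq_card; apply/bigcupsP=> e he.
  by have [v [u [_ _ s _]]] := M_facts he.
move: tI hc; rewrite /trivIset hs => /eqP <-; lia.
Qed.

Definition Bm := [set w in A0 | multi w].
Definition Z := \bigcup_(w in Bm) M w.

Lemma Z_card : #|Z| <= 2 * #|A0|.
Proof.
apply: leq_trans (card_bigcup_le _ _) _.
apply: leq_trans (_ : \sum_(w in Bm) 2 <= _).
  apply: leq_sum => w; rewrite inE => /andP[wA hm]; exact: M_card.
rewrite sum_nat_const mulnC leq_mul2l /=.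
by apply: subset_leq_card; apply/subsetP=> w; rewrite inE => /andP[].
Qed.

Definition T := [set v in A2 | [forall w in S v, multi w]].

Lemma inZ v w : v \in A2 -> w \in S v -> multi w -> v :&: w \in Z.
Proof.
move=> vA2 wS hm.
have wB : w \in Bm by rewrite inE (Sv_A0 wS) hm.
apply: (subsetP (bigcup_sup _ wB)).
by apply/imsetP; exists v => //; rewrite inE vA2 wS.
Qed.

Lemma T_facts v : v \in T -> exists w1 w2,
  [/\ w1 != w2, S v = [set w1; w2], v :&: w1 \in Z, v :&: w2 \in Z & v \in A2].
Proof.
rewrite inE => /andP[vA2 /forall_inP hm].
have [_ /eqP /cards2P [x [y [hxy hS]]]] := A2P vA2.
have ix : x \in S v by rewrite hS !inE eqxx.
have iy : y \in S v by rewrite hS !inE eqxx orbT.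
exists x, y; split=> //; apply: inZ => //; exact: hm.
Qed.

Lemma key2 v w1 w2 : v \in A2 -> S v = [set w1; w2] -> w1 != w2 -> w1 :&: w2 = set0.
Proof.
move=> _ hS hne.
have i1 : w1 \in S v by rewrite hS !inE eqxx.
have i2 : w2 \in S v by rewrite hS !inE eqxx orbT.
exact: dis0 (Sv_A0 i1) (Sv_A0 i2) hne.
Qed.

Lemma T_lower v : v \in T -> 2 <= #|[set e in Z | e \subset v]|.
Proof.
case/T_facts=> w1 [w2 [hne hS z1 z2 vA2]].
have [c1 c2 _] := key vA2 hS hne.
have d := key2 vA2 hS hne.
have ne : v :&: w1 != v :&: w2.
  apply/eqP=> e.
  have : v :&: w1 \subset w1 :&: w2.
    by rewrite subsetI subsetIr e subsetIr.
  rewrite d subset0 -cards_eq0 c1 //.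
have <- : #|[set v :&: w1; v :&: w2]| = 2 by rewrite cards2 ne.
apply: subset_leq_card; apply/subsetP=> e; rewrite !inE => /orP[]/eqP->;
  by rewrite ?z1 ?z2 subsetIl.
Qed.

Lemma rest (v a b e : {set 'I_n}) : v \in A2 -> S v = [set a; b] -> a != b ->
  e \subset v -> e \subset a -> #|e| = 2 -> v :\: e = v :&: b.
Proof.
move=> vA2 hS hne ev ea ce.
have [ca cb sub] := key vA2 hS hne.
have d := key2 vA2 hS hne.
have -> : e = v :&: a.
  by apply/eqP; rewrite eqEcard subsetI ev ea ca ce /=.
apply/setP=> x; rewrite !inE.
have h1 : x \in v -> (x \in a) || (x \in b) by move/(subsetP sub); rewrite inE.
have h2 : x \in a -> x \in b -> False.
  move=> xa xb; have : x \in a :&: b by rewrite inE xa xb.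
  by rewrite d inE.
move: h1 h2; case: (x \in v); case: (x \in a); case: (x \in b) => //= h1 h2.
- by case: h2.
- by have := h1 isT.
Qed.

Lemma fiber e : e \in Z -> #|[set v in T | e \subset v]| <= #|Z|.
Proof.
move=> eZ.
have [w0 w0B eM] : exists2 w0, w0 \in Bm & e \in M w0 by apply/bigcupP.
have [v0 [u0 [_ _ ew0 ce]]] := M_facts eM.
have w0A : w0 \in A0 by move: w0B; rewrite inE => /andP[].
rewrite -(@card_in_imset _ _ (fun v => v :\: e) [set v in T | e \subset v]); last first.
  move=> v v'; rewrite !inE => /andP[_ h] /andP[_ h'] /= eq.
  by rewrite -(setID v e) -(setID v' e) (setIidPr h) (setIidPr h') eq.
apply: subset_leq_card; apply/subsetP=> x /imsetP [v]; rewrite inE => /andP[vT ev] ->.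
have [w1 [w2 [hne hS z1 z2 vA2]]] := T_facts vT.
have w0S : w0 \in S v.
  rewrite inE w0A -setI_eq0 /=; apply/eqP=> h.
  have : e \subset v :&: w0 by rewrite subsetI ev ew0.
  by rewrite h subset0 -cards_eq0 ce.
move: (w0S); rewrite hS !inE => /orP[] /eqP hw; subst w0.
  by rewrite (rest vA2 hS hne ev ew0 ce).
have hS' : S v = [set w2; w1] by rewrite hS setUC.
have hne' : w2 != w1 by rewrite eq_sym.
by rewrite (rest vA2 hS' hne' ev ew0 ce).
Qed.

Lemma card_sep (U : finType) (X : {set U}) (p : pred U) :
  #|[set x in X | p x]| = \sum_(x in X) (p x : nat).
Proof.
rewrite -sum1_card (eq_bigl (fun x => (x \in X) && p x)); last by move=> x; rewrite inE.
by rewrite big_mkcondr; apply: eq_bigr => x _; case: (p x).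
Qed.

Lemma T_card : 2 * #|T| <= #|Z| ^ 2.
Proof.
apply: leq_trans (_ : \sum_(v in T) #|[set e in Z | e \subset v]| <= _).
  apply: (@leq_trans (#|T| * 2)); first by rewrite mulnC.
  rewrite -sum_nat_const; apply: leq_sum => v; exact: T_lower.
under eq_bigr do rewrite card_sep.
rewrite exchange_big /=.
under eq_bigr do rewrite -(card_sep T (fun v => _ \subset v)).
rewrite expnS expn1 -sum_nat_const; apply: leq_sum => e; exact: fiber.
Qed.

Lemma R_small w : w \in A0 -> ~~ multi w -> #|R w| <= 256.
Proof.
move=> wA hm.
case: (set_0Vmem (R w)) => [->|[v0 Hv0]]; first by rewrite cards0.
move: (Hv0); rewrite inE => /andP[v0A2 wS0].
have [u0 pu0] := partner v0A2 wS0.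
have [_ u0A _ _ _] := pe_facts pu0.
have sub : R w \subset powerset (w :|: u0).
  apply/subsetP=> v; rewrite inE => /andP[vA2 wS].
  have [u pu] := partner vA2 wS.
  case: (eqVneq u u0) => [eu|hne].
    subst u; have [_ _ _ s _] := pe_facts pu; by rewrite powersetE.
  case/negP: hm; apply/existsP; exists v; apply/existsP; exists v0.
  apply/existsP; exists u; apply/existsP; exists u0; by rewrite pu pu0 hne.
apply: leq_trans (subset_leq_card sub) _.
rewrite card_powerset (_ : 256 = 2 ^ 8) // leq_exp2l //.
rewrite cardsU (sz4 (A0A wA)) (sz4 (A0A u0A)); exact: leq_subr.
Qed.

Definition Bn := [set w in A0 | ~~ multi w].

Lemma U_card : #|A2 :\: T| <= 256 * #|A0|.
Proof.
have sub : A2 :\: T \subset \bigcup_(w in Bn) R w.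
  apply/subsetP=> v; rewrite inE => /andP[vT vA2].
  have : ~~ [forall w in S v, multi w] by move: vT; rewrite inE vA2.
  case/forall_inPn => w wS hm.
  have wB : w \in Bn by rewrite inE (Sv_A0 wS) hm.
  apply: (subsetP (bigcup_sup _ wB)); by rewrite inE vA2 wS.
apply: leq_trans (subset_leq_card sub) _.
apply: leq_trans (card_bigcup_le _ _) _.
apply: leq_trans (_ : \sum_(w in Bn) 256 <= _).
  apply: leq_sum => w; rewrite inE => /andP[wA hm]; exact: R_small.
rewrite sum_nat_const mulnC leq_mul2l /=.
by apply: subset_leq_card; apply/subsetP=> w; rewrite inE => /andP[].
Qed.

Lemma k_bound : 4 * #|A0| <= n.
Proof.
have tI : trivIset A0.
  apply/trivIsetP=> u w hu hw hne; rewrite -setI_eq0; exact/eqP/dis0.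
have hs : \sum_(w in A0) #|w| = #|A0| * 4.
  rewrite -sum_nat_const; apply: eq_bigr => w hw; exact: sz4 (A0A hw).
rewrite mulnC -hs (eqP tI).
by apply: leq_trans (max_card _) _; rewrite card_ord.
Qed.

Lemma main_bound : #|A2| <= 2 * #|A0| ^ 2 + 64 * n.
Proof.
have h1 : #|A2| <= #|T| + #|A2 :\: T|.
  rewrite -(cardsID T A2) leq_add2r; apply: subset_leq_card; exact: subsetIr.
have h2 := T_card; have h3 := Z_card; have h4 := U_card; have h5 := k_bound.
have h6 : #|Z| ^ 2 <= 4 * #|A0| ^ 2.
  by rewrite (_ : 4 = 2 ^ 2) // -expnMn leq_exp2r.
move: h1 h2 h4 h5 h6.
move: (#|A0| ^ 2) => k2.
move: (#|A2|) (#|T|) (#|A2 :\: T|) (#|Z| ^ 2) (#|A0|) => a t u z k.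
clear; lia.
Qed.

End Main.

Lemma asym (eps : rat) : (0 < eps)%R -> exists N : nat,
    forall n : nat, N <= n -> ((64 * n)%:R <= eps * (n ^ 2)%:R)%R.
Proof.
move=> he.
have h0 : (0 <= (64%:R : rat) / eps)%R by rewrite divr_ge0 ?ler0n // ltW.
exists (Num.Def.archi_bound ((64%:R : rat) / eps)) => n hn.
have hlt := archi_boundP h0.
have hn' : ((Num.Def.archi_bound ((64%:R : rat) / eps))%:R <= (n%:R : rat))%R by rewrite ler_nat.
have h64 : ((64%:R : rat) < n%:R * eps)%R.
  rewrite -(ltr_pdivrMr _ _ he); exact: lt_le_trans hlt hn'.
rewrite natrM natrX expr2 mulrA.
apply: ler_wpM2r; first by rewrite ler0n.
by rewrite mulrC ltW.
Qed.

Theorem lemma5 :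
  exists f : nat -> nat,
    (forall eps : rat, (0 < eps)%R ->
       exists N : nat, forall n : nat, (N <= n)%N ->
         ((f n)%:R <= eps * (n ^ 2)%:R)%R) /\
    (forall (n : nat) (A A0 : {set {set 'I_n}}),
       G41_indep A -> max_disj_subfam A A0 ->
       (#|A2_of A A0| <= 2 * #|A0| ^ 2 + f n)%N).
Proof.
exists (fun n => 64 * n); split; last first.
  by move=> n A A0 HA HA0; exact: (main_bound HA HA0).
exact: asym.
Qed.
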